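(* Let $j\in\mathbb{N}$, $1\le r\le\infty$ and $s<j-\frac12$. Then for any $T>0$ the flow map $S:\hat H^s_r(\mathbb{T})\times(-T,T)\to\hat H^s_r(\mathbb{T})$ of the periodic Cauchy problem $$i\partial_tu+(-1)^{j+1}\partial_x^{2j}u=iu^2\,\partial_x^{2j-1}\overline u$$ cannot be uniformly continuous on bounded sets.
   Context: $\mathbb{T}=\mathbb{R}/2\pi\mathbb{Z}$; $\|u\|_{\hat H^s_r(\mathbb{T})}=\|\langle k\rangle^s\hat u(k)\|_{\ell^{r'}_k(\mathbb{Z})}$ with $r'$ the Hölder conjugate of $r$. *)

(* Defs.v *)
From Stdlib Require Import Reals ZArith.
From Coquelicot Require Import Coquelicot.
Open Scope R_scope.

(** Positive-part power: x^y for x > 0, and 0 for x <= 0 (used with y > 0,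
    so that 0^y = 0 as it should; Stdlib's Rpower 0 y = 1). *)
Definition ppow (x y : R) : R := if Rlt_dec 0 x then Rpower x y else 0.

Definition jbr (s : R) (k : Z) : R := Rpower (1 + (IZR k)^2) (s / 2).

Definition conj_exp (r : Rbar) : Rbar :=
  match r with
  | Finite x => if Req_EM_T x 1 then p_infty else Finite (x / (x - 1))
  | p_infty => Finite 1
  | m_infty => Finite 1 (* irrelevant: r >= 1 is always assumed *)
  end.

Definition zsum (g : Z -> R) (n : nat) : R :=
  sum_f_R0 (fun i => g (Z.of_nat i - Z.of_nat n)%Z) (2 * n).

Definition lq_norm (q : Rbar) (a : Z -> C) : Rbar :=
  match q with
  | Finite p =>
      match Lim_seq (zsum (fun k => ppow (Cmod (a k)) p)) with
      | Finite sm => Finite (ppow sm (/ p))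
      | p_infty => p_infty
      | m_infty => Finite 0 (* impossible: the partial sums are >= 0 *)
      end
  | _ => Lub_Rbar (fun y => exists k : Z, y = Cmod (a k))
  end.

(** ||u||_{\hat H^s_r(T)} = || <k>^s \hat u(k) ||_{ell^{r'}_k(Z)},
    for u given by its Fourier coefficient sequence a = \hat u : Z -> C. *)
Definition hatH_norm (s : R) (r : Rbar) (a : Z -> C) : Rbar :=
  lq_norm (conj_exp r) (fun k => Cmult (RtoC (jbr s k)) (a k)).

Definition seq_sub (a b : Z -> C) : Z -> C := fun k => Cminus (a k) (b k).

(** Fourier coefficients on T = R / 2piZ:
    \hat f(k) = (1/2pi) int_0^{2pi} f(x) e^{-ikx} dx (real and imaginary parts). *)
Definition fourier (f : R -> C) (k : Z) : C :=
  ( / (2 * PI) * RInt (fun x => Re (f x) * cos (IZR k * x) + Im (f x) * sin (IZR k * x)) 0 (2 * PI),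
    / (2 * PI) * RInt (fun x => Im (f x) * cos (IZR k * x) - Re (f x) * sin (IZR k * x)) 0 (2 * PI)).

Definition dx (n : nat) (u : R -> R -> C) (t x : R) : C :=
  (Derive_n (fun y => Re (u t y)) n x, Derive_n (fun y => Im (u t y)) n x).
Definition dt (u : R -> R -> C) (t x : R) : C :=
  (Derive (fun tau => Re (u tau x)) t, Derive (fun tau => Im (u tau x)) t).

Definition classical_solution (j : nat) (T : R) (u : R -> R -> C) : Prop :=
  forall t, -T < t < T ->
    (forall x, u t (x + 2 * PI) = u t x) /\
    (forall n x, ex_derive_n (fun y => Re (u t y)) n x /\
                 ex_derive_n (fun y => Im (u t y)) n x) /\
    (forall x, ex_derive (fun tau => Re (u tau x)) t /\
               ex_derive (fun tau => Im (u tau x)) t) /\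
    (forall n x, continuous (fun p : R * R => Re (dx n u (fst p) (snd p))) (t, x) /\
                 continuous (fun p : R * R => Im (dx n u (fst p) (snd p))) (t, x)) /\
    (forall x, continuous (fun p : R * R => Re (dt u (fst p) (snd p))) (t, x) /\
               continuous (fun p : R * R => Im (dt u (fst p) (snd p))) (t, x)) /\
    (forall x,
       Cplus (Cmult Ci (dt u t x)) (Cmult (RtoC ((-1) ^ (j + 1))) (dx (2 * j) u t x))
       = Cmult Ci (Cmult (Cmult (u t x) (u t x)) (Cconj (dx (2 * j - 1) u t x)))).

Definition is_flow_map (j : nat) (T : R) (S : (Z -> C) -> R -> (Z -> C)) : Prop :=
  forall u, classical_solution j T u ->
    forall t, -T < t < T -> S (fourier (u 0)) t = fourier (u t).

Definition unif_cont_on_bounded (s : R) (r : Rbar) (T : R)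
    (S : (Z -> C) -> R -> (Z -> C)) : Prop :=
  forall M, 0 < M -> forall eps, 0 < eps -> exists delta, 0 < delta /\
    forall a b t t',
      Rbar_le (hatH_norm s r a) M -> Rbar_le (hatH_norm s r b) M ->
      -T < t < T -> -T < t' < T ->
      Rbar_lt (hatH_norm s r (seq_sub a b)) delta -> Rabs (t - t') < delta ->
      Rbar_lt (hatH_norm s r (seq_sub (S a t) (S b t'))) eps.

(* Main.v *)
Require Import Defs.
From Stdlib Require Import Reals ZArith Lra Lia FunctionalExtensionality.
From Coquelicot Require Import Coquelicot.
Open Scope R_scope.

Lemma cos_plus_PI2 z : cos (z + PI/2) = - sin z.
Proof. rewrite cos_plus, cos_PI2, sin_PI2; ring. Qed.
Lemma sin_plus_PI2 z : sin (z + PI/2) = cos z.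
Proof. rewrite sin_plus, cos_PI2, sin_PI2; ring. Qed.

Lemma Dn_cos (K N c : R) n : forall y,
  Derive_n (fun y => K * cos (N*y + c)) n y = K * N^n * cos (N*y + c + INR n * (PI/2)).
Proof.
  induction n as [|n IH]; intros y.
  - simpl. replace (N*y + c + 0 * (PI/2)) with (N*y+c) by ring. ring.
  - simpl Derive_n. rewrite (Derive_ext _ _ y IH).
    apply is_derive_unique. auto_derive; [easy|].
    rewrite S_INR. replace (N * y + c + (INR n + 1) * (PI / 2)) with
      ((N * y + c + INR n * (PI / 2)) + PI/2) by ring.
    rewrite cos_plus_PI2. simpl. ring.
Qed.

Lemma Dn_sin (K N c : R) n : forall y,
  Derive_n (fun y => K * sin (N*y + c)) n y = K * N^n * sin (N*y + c + INR n * (PI/2)).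
Proof.
  induction n as [|n IH]; intros y.
  - simpl. replace (N*y + c + 0 * (PI/2)) with (N*y+c) by ring. ring.
  - simpl Derive_n. rewrite (Derive_ext _ _ y IH).
    apply is_derive_unique. auto_derive; [easy|].
    rewrite S_INR. replace (N * y + c + (INR n + 1) * (PI / 2)) with
      ((N * y + c + INR n * (PI / 2)) + PI/2) by ring.
    rewrite sin_plus_PI2. simpl. ring.
Qed.

Lemma exn_cos (K N c : R) n y : ex_derive_n (fun y => K * cos (N*y + c)) n y.
Proof.
  destruct n; simpl; [easy|].
  eapply ex_derive_ext. { intros t. symmetry. apply Dn_cos. }
  auto_derive. easy.
Qed.
Lemma exn_sin (K N c : R) n y : ex_derive_n (fun y => K * sin (N*y + c)) n y.
Proof.
  destruct n; simpl; [easy|].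
  eapply ex_derive_ext. { intros t. symmetry. apply Dn_sin. }
  auto_derive. easy.
Qed.

Lemma cos_jPI z j : cos (z + INR j * PI) = (-1)^j * cos z.
Proof.
  induction j. simpl. rewrite Rmult_0_l, Rplus_0_r; ring.
  rewrite S_INR. replace (z + (INR j + 1) * PI) with ((z + INR j * PI) + PI) by ring.
  rewrite neg_cos, IHj. simpl; ring.
Qed.
Lemma sin_jPI z j : sin (z + INR j * PI) = (-1)^j * sin z.
Proof.
  induction j. simpl. rewrite Rmult_0_l, Rplus_0_r; ring.
  rewrite S_INR. replace (z + (INR j + 1) * PI) with ((z + INR j * PI) + PI) by ring.
  rewrite neg_sin, IHj. simpl; ring.
Qed.

Lemma cont_cos_lin K a b c t x :
  continuous (fun p : R*R => K * cos (a * fst p + b * snd p + c)) (t,x).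
Proof.
  apply (continuous_comp (fun p : R*R => a * fst p + b * snd p + c) (fun z => K * cos z)).
  - apply (continuous_plus (fun p : R*R => a * fst p + b * snd p) (fun _ => c)).
    apply (continuous_plus (fun p : R*R => a * fst p) (fun p : R*R => b * snd p)).
    apply (continuous_mult (fun _ => a) (fun p : R*R => fst p)).
    apply continuous_const. apply continuous_fst.
    apply (continuous_mult (fun _ => b) (fun p : R*R => snd p)).
    apply continuous_const. apply continuous_snd.
    apply continuous_const.
  - apply (continuous_mult (fun _ => K) cos). apply continuous_const. apply continuous_cos.
Qed.
Lemma cont_sin_lin K a b c t x :
  continuous (fun p : R*R => K * sin (a * fst p + b * snd p + c)) (t,x).
Proof.
  apply (continuous_comp (fun p : R*R => a * fst p + b * snd p + c) (fun z => K * sin z)).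
  - apply (continuous_plus (fun p : R*R => a * fst p + b * snd p) (fun _ => c)).
    apply (continuous_plus (fun p : R*R => a * fst p) (fun p : R*R => b * snd p)).
    apply (continuous_mult (fun _ => a) (fun p : R*R => fst p)).
    apply continuous_const. apply continuous_fst.
    apply (continuous_mult (fun _ => b) (fun p : R*R => snd p)).
    apply continuous_const. apply continuous_snd.
    apply continuous_const.
  - apply (continuous_mult (fun _ => K) sin). apply continuous_const. apply continuous_sin.
Qed.

Definition pw (A N w : R) : R -> R -> C :=
  fun t x => (A * cos (N * x + - (w * t)), A * sin (N * x + - (w * t))).

Lemma dx_pw A N w n t x : dx n (pw A N w) t x =
  (A * N^n * cos (N*x + - (w*t) + INR n * (PI/2)), A * N^n * sin (N*x + - (w*t) + INR n * (PI/2))).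
Proof. unfold dx, pw, Re, Im; simpl. rewrite Dn_cos, Dn_sin. reflexivity. Qed.

Lemma dt_pw A N w t x : dt (pw A N w) t x =
  (A * w * sin (N*x + - (w*t)), - (A * w) * cos (N*x + - (w*t))).
Proof.
  unfold dt, pw, Re, Im; simpl. f_equal; apply is_derive_unique; auto_derive; auto. all: match goal with |- ?a = ?b => change (@eq R a b) end; ring.
Qed.

Lemma pw_sol j T A n : (1 <= j)%nat ->
  classical_solution j T (pw A (INR n) (INR n ^ (2*j) + (-1)^(j+1) * A^2 * INR n ^ (2*j-1))).
Proof.
  intros Hj. set (N := INR n). set (w := N ^ (2*j) + (-1)^(j+1) * A^2 * N ^ (2*j-1)).
  intros t Ht. split; [|split; [|split; [|split; [|split]]]].
  - intros x. unfold pw. f_equal; f_equal;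
    [ rewrite <- (cos_period (N*x + - (w*t)) n) | rewrite <- (sin_period (N*x + - (w*t)) n) ]; f_equal; unfold N; ring.
  - intros k x. unfold pw, Re, Im; simpl. split; [apply exn_cos | apply exn_sin].
  - intros x. unfold pw, Re, Im; simpl. split; auto_derive; auto.
  - intros k x. split.
    + apply (continuous_ext (fun p : R*R => (A * N^k) * cos ((-w) * fst p + N * snd p + INR k * (PI/2)))).
      { intros p. rewrite dx_pw. simpl. f_equal. f_equal. ring. }
      apply cont_cos_lin.
    + apply (continuous_ext (fun p : R*R => (A * N^k) * sin ((-w) * fst p + N * snd p + INR k * (PI/2)))).
      { intros p. rewrite dx_pw. simpl. f_equal. f_equal. ring. }
      apply cont_sin_lin.
  - intros x. split.
    + apply (continuous_ext (fun p : R*R => (A * w) * sin ((-w) * fst p + N * snd p + 0))).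
      { intros p. rewrite dt_pw. simpl. f_equal. f_equal. ring. }
      apply cont_sin_lin.
    + apply (continuous_ext (fun p : R*R => (- (A * w)) * cos ((-w) * fst p + N * snd p + 0))).
      { intros p. rewrite dt_pw. simpl. f_equal. f_equal. ring. }
      apply cont_cos_lin.
  - intros x. rewrite dt_pw, !dx_pw. unfold pw.
    set (th := N * x + - (w * t)).
    replace (INR (2*j)) with (INR j * 2) by (rewrite mult_INR; simpl; ring).
    replace (INR (2*j-1)) with (INR j * 2 - 1) by
      (rewrite minus_INR by lia; rewrite mult_INR; simpl; ring).
    replace (th + INR j * 2 * (PI/2)) with (th + INR j * PI) by field.
    replace (th + (INR j * 2 - 1) * (PI/2)) with ((th + INR j * PI) - PI/2) by field.
    rewrite cos_minus, sin_minus, cos_PI2, sin_PI2, cos_jPI, sin_jPI.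
    set (P := N ^ (2*j-1)).
    assert (HN : N ^ (2*j) = N * P).
    { unfold P. rewrite tech_pow_Rmult. f_equal. lia. }
    assert (Hw : w = N * P + (-1)^(j+1) * A^2 * P).
    { unfold w. rewrite HN. reflexivity. }
    rewrite HN. rewrite Hw. rewrite pow_add.
    assert (Hs : (-1)^j * (-1)^j = 1). { rewrite <- pow_add. replace (j+j)%nat with (2*j)%nat by lia.
      rewrite pow_mult. replace ((-1)^2) with 1 by ring. apply pow1. }
    assert (Hcs : cos th ^ 2 + sin th ^ 2 = 1) by (pose proof (sin2_cos2 th) as H; unfold Rsqr in H; nra).
    set (sg := (-1)^j) in *. set (c := cos th) in *. set (s := sin th) in *.
    unfold Cplus, Cmult, Cconj, Ci, RtoC; cbn [fst snd].
    f_equal.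
    + apply Rminus_diag_uniq.
      match goal with |- ?a - ?b = 0 => replace (a - b) with
        (A*N*P*c*(1 - sg*sg) + A^3*P*sg*c*(c^2+s^2-1)) by ring end.
      rewrite Hs, Hcs; ring.
    + apply Rminus_diag_uniq.
      match goal with |- ?a - ?b = 0 => replace (a - b) with
        (A*N*P*s*(1 - sg*sg) + A^3*P*sg*s*(c^2+s^2-1)) by ring end.
      rewrite Hs, Hcs; ring.
Qed.

Ltac rring := match goal with |- ?a = ?b => change (@eq R a b) end; ring.

Definition single (n : nat) (c : C) : Z -> C :=
  fun k => if Z.eq_dec k (Z.of_nat n) then c else (0,0).

Lemma IZR_nat_or_neg (m : Z) : exists k : nat, IZR m = INR k \/ IZR m = - INR k.
Proof.
  destruct m as [|p|p].
  - exists 0%nat. left. reflexivity.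
  - exists (Pos.to_nat p). left. rewrite INR_IZR_INZ, positive_nat_Z. reflexivity.
  - exists (Pos.to_nat p). right. rewrite INR_IZR_INZ, positive_nat_Z.
    rewrite <- opp_IZR. reflexivity.
Qed.

Lemma sin_int_period (m : Z) f : sin (IZR m * (2*PI) + f) = sin f.
Proof.
  destruct (IZR_nat_or_neg m) as [k [H|H]]; rewrite H.
  - replace (INR k * (2*PI) + f) with (f + 2 * INR k * PI) by ring. apply sin_period.
  - rewrite <- (sin_period (- INR k * (2 * PI) + f) k). f_equal. ring.
Qed.
Lemma cos_int_period (m : Z) f : cos (IZR m * (2*PI) + f) = cos f.
Proof.
  destruct (IZR_nat_or_neg m) as [k [H|H]]; rewrite H.
  - replace (INR k * (2*PI) + f) with (f + 2 * INR k * PI) by ring. apply cos_period.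
  - rewrite <- (cos_period (- INR k * (2 * PI) + f) k). f_equal. ring.
Qed.

Lemma RInt_cos_lin (m : Z) f A : m <> 0%Z ->
  RInt (fun x => A * cos (IZR m * x + f)) 0 (2*PI) = 0.
Proof.
  intros Hm. assert (Hm' : IZR m <> 0) by (apply not_0_IZR; exact Hm).
  assert (H := is_RInt_derive (fun x => A * sin (IZR m * x + f) / IZR m)
      (fun x => A * cos (IZR m * x + f)) 0 (2*PI)).
  assert (D : forall x : R, Rmin 0 (2 * PI) <= x <= Rmax 0 (2 * PI) ->
   is_derive (fun x0 : R => A * sin (IZR m * x0 + f) / IZR m) x
     ((fun x0 : R => A * cos (IZR m * x0 + f)) x)).
  { intros x _. auto_derive; auto. field. exact Hm'. }
  assert (Cn : forall x : R, Rmin 0 (2 * PI) <= x <= Rmax 0 (2 * PI) ->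
   continuous (fun x0 : R => A * cos (IZR m * x0 + f)) x).
  { intros x _. apply (@ex_derive_continuous R_AbsRing R_NormedModule). auto_derive. auto. }
  rewrite (is_RInt_unique _ _ _ _ (H D Cn)).
  unfold minus, plus, opp; simpl. rewrite sin_int_period.
  replace (IZR m * 0 + f) with f by ring. field. exact Hm'.
Qed.

Lemma RInt_sin_lin (m : Z) f A : m <> 0%Z ->
  RInt (fun x => A * sin (IZR m * x + f)) 0 (2*PI) = 0.
Proof.
  intros Hm. assert (Hm' : IZR m <> 0) by (apply not_0_IZR; exact Hm).
  assert (H := is_RInt_derive (fun x => - A * cos (IZR m * x + f) / IZR m)
      (fun x => A * sin (IZR m * x + f)) 0 (2*PI)).
  assert (D : forall x : R, Rmin 0 (2 * PI) <= x <= Rmax 0 (2 * PI) ->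
   is_derive (fun x0 : R => - A * cos (IZR m * x0 + f) / IZR m) x
     ((fun x0 : R => A * sin (IZR m * x0 + f)) x)).
  { intros x _. auto_derive; auto. field. exact Hm'. }
  assert (Cn : forall x : R, Rmin 0 (2 * PI) <= x <= Rmax 0 (2 * PI) ->
   continuous (fun x0 : R => A * sin (IZR m * x0 + f)) x).
  { intros x _. apply (@ex_derive_continuous R_AbsRing R_NormedModule). auto_derive. auto. }
  rewrite (is_RInt_unique _ _ _ _ (H D Cn)).
  unfold minus, plus, opp; simpl. rewrite cos_int_period.
  replace (IZR m * 0 + f) with f by ring. field. exact Hm'.
Qed.

Lemma fourier_pw A n w t :
  fourier (pw A (INR n) w t) = single n (A * cos (- (w*t)), A * sin (- (w*t))).
Proof.
  apply functional_extensionality; intros k. unfold fourier, pw, single, Re, Im; cbn [fst snd].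
  rewrite (RInt_ext _ (fun x => A * cos (IZR (Z.of_nat n - k) * x + - (w*t)))).
  2:{ intros x _. rewrite minus_IZR, <- INR_IZR_INZ.
      replace ((INR n - IZR k) * x + - (w * t)) with ((INR n * x + - (w*t)) - IZR k * x) by ring.
      rewrite cos_minus; rring. }
  rewrite (RInt_ext (fun x => _ - _) (fun x => A * sin (IZR (Z.of_nat n - k) * x + - (w*t)))).
  2:{ intros x _. rewrite minus_IZR, <- INR_IZR_INZ.
      replace ((INR n - IZR k) * x + - (w * t)) with ((INR n * x + - (w*t)) - IZR k * x) by ring.
      rewrite sin_minus; rring. }
  destruct (Z.eq_dec k (Z.of_nat n)) as [E|E].
  - subst k. rewrite Z.sub_diag.
    rewrite (RInt_ext _ (fun _ => A * cos (- (w*t)))) by (intros; simpl; f_equal; f_equal; ring).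
    rewrite (RInt_ext (fun x => A * sin _) (fun _ => A * sin (- (w*t)))) by (intros; simpl; f_equal; f_equal; ring).
    rewrite !RInt_const. unfold scal; simpl. unfold mult; simpl.
    pose proof PI_RGT_0. f_equal; field; lra.
  - rewrite RInt_cos_lin, RInt_sin_lin by lia. f_equal; ring.
Qed.

Lemma conj_cases r : Rbar_le 1 r ->
  conj_exp r = p_infty \/ exists p, 0 < p /\ conj_exp r = Finite p.
Proof.
  destruct r as [x| |]; simpl; intros H.
  - destruct (Req_EM_T x 1) as [E|E]. left; reflexivity.
    right. exists (x / (x-1)). split; [|reflexivity].
    assert (1 < x) by lra. apply Rdiv_lt_0_compat; lra.
  - right. exists 1. split; [lra|reflexivity].
  - contradiction.
Qed.

Lemma sum_delta (K m : nat) v :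
  sum_f_R0 (fun i => if Nat.eq_dec i K then v else 0) m = if le_dec K m then v else 0.
Proof.
  induction m.
  - change (sum_f_R0 (fun i => if Nat.eq_dec i K then v else 0) 0) with
      (if Nat.eq_dec 0 K then v else 0).
    destruct (Nat.eq_dec 0 K), (le_dec K 0); try reflexivity; lia.
  - rewrite tech5, IHm. destruct (Nat.eq_dec (S m) K), (le_dec K m), (le_dec K (S m));
    try lia; ring.
Qed.

Lemma ppow0 p : ppow 0 p = 0.
Proof. unfold ppow. destruct (Rlt_dec 0 0); [lra|reflexivity]. Qed.

Lemma Cmod00 : Cmod (0,0) = 0.
Proof. exact Cmod_0. Qed.

Lemma lq_single q (n : nat) c : q = p_infty \/ (exists p, 0 < p /\ q = Finite p) ->
  lq_norm q (single n c) = Finite (Cmod c).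
Proof.
  intros [Hq | [p [Hp Hq]]]; subst q; simpl.
  - apply is_lub_Rbar_unique. split.
    + intros y [k Hk]. subst y. unfold single. destruct (Z.eq_dec k (Z.of_nat n)).
      simpl; lra. rewrite Cmod00. simpl. apply Cmod_ge_0.
    + intros b Hb. apply Hb. exists (Z.of_nat n). unfold single.
      destruct (Z.eq_dec (Z.of_nat n) (Z.of_nat n)); [reflexivity|congruence].
  - set (v := ppow (Cmod c) p).
    rewrite (Lim_seq_ext_loc _ (fun _ => v)).
    + rewrite Lim_seq_const. unfold v, ppow.
      destruct (Rlt_dec 0 (Cmod c)) as [Hc|Hc].
      * destruct (Rlt_dec 0 (Rpower (Cmod c) p)) as [H2|H2].
        -- rewrite Rpower_mult. rewrite Rinv_r by lra. apply f_equal. apply Rpower_1; exact Hc.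
        -- exfalso. apply H2. unfold Rpower. apply exp_pos.
      * destruct (Rlt_dec 0 0); [lra|]. pose proof (Cmod_ge_0 c). f_equal; lra.
    + exists n. intros m Hm. unfold zsum.
      rewrite (sum_eq _ (fun i => if Nat.eq_dec i (m + n) then v else 0)).
      * rewrite sum_delta. destruct (le_dec (m+n) (2*m)); [reflexivity|lia].
      * intros i _. unfold single. destruct (Z.eq_dec (Z.of_nat i - Z.of_nat m) (Z.of_nat n));
        destruct (Nat.eq_dec i (m+n)); try lia. reflexivity.
        rewrite Cmod00. apply ppow0.
Qed.

Lemma jbr_pos s k : 0 < jbr s k.
Proof. unfold jbr, Rpower. apply exp_pos. Qed.

Lemma hatH_single s r n c : Rbar_le 1 r ->
  hatH_norm s r (single n c) = Finite (jbr s (Z.of_nat n) * Cmod c).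
Proof.
  intros Hr. unfold hatH_norm.
  replace (fun k => Cmult (RtoC (jbr s k)) (single n c k)) with
    (single n (Cmult (RtoC (jbr s (Z.of_nat n))) c)).
  - rewrite lq_single by (apply conj_cases; exact Hr).
    rewrite Cmod_mult, Cmod_R, Rabs_pos_eq by (apply Rlt_le, jbr_pos). reflexivity.
  - apply functional_extensionality; intros k. unfold single.
    destruct (Z.eq_dec k (Z.of_nat n)). subst; reflexivity.
    unfold Cmult, RtoC; simpl. f_equal; ring.
Qed.

Lemma sub_single n a b : seq_sub (single n a) (single n b) = single n (Cminus a b).
Proof.
  apply functional_extensionality; intros k. unfold seq_sub, single.
  destruct (Z.eq_dec k (Z.of_nat n)). reflexivity.
  unfold Cminus, Cplus, Copp; simpl. f_equal; ring.
Qed.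

Lemma big_N (j : nat) s X : (1 <= j)%nat -> s < INR j - /2 ->
  exists n : nat, (1 <= n)%nat /\ X < INR n ^ (2*j-1) / Rpower (1 + INR n ^ 2) s.
Proof.
  intros Hj Hs.
  set (e := 2 * INR j - 1 - 2 * s).
  assert (He : 0 < e) by (unfold e; lra).
  set (X' := Rmax X 1).
  assert (HX' : 0 < X') by (unfold X'; pose proof (Rmax_r X 1); lra).
  assert (Hl2 : 0 < ln 2) by (rewrite <- ln_1; apply ln_increasing; lra).
  set (L := (ln X' + Rabs s * ln 2) / e).
  destruct (nfloor_ex (Rmax 0 (exp L))) as [m Hm]. { apply Rmax_l. }
  exists (S m). split; [lia|].
  set (y := INR (S m)).
  assert (Hy : exp L < y) by (unfold y; rewrite S_INR; pose proof (Rmax_r 0 (exp L)); lra).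
  assert (Hy1 : 1 <= y) by (unfold y; rewrite S_INR; pose proof (pos_INR m); lra).
  assert (HlnL : L < ln y) by (rewrite <- (ln_exp L); apply ln_increasing; [apply exp_pos | exact Hy]).
  assert (Hlny : 0 <= ln y) by (rewrite <- ln_1; apply ln_le; lra).
  assert (Hq : 0 < 1 + y ^ 2) by nra.
  assert (Ha : ln (1 + y^2) >= 2 * ln y).
  { replace (2 * ln y) with (ln (y * y)) by (rewrite ln_mult by lra; ring).
    apply Rle_ge, ln_le; nra. }
  assert (Hb : ln (1 + y^2) <= ln 2 + 2 * ln y).
  { replace (ln 2 + 2 * ln y) with (ln (2 * (y * y))) by (rewrite !ln_mult by nra; ring).
    apply ln_le; nra. }
  assert (Hpow : y ^ (2*j-1) = exp (INR (2*j-1) * ln y)).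
  { rewrite <- Rpower_pow by lra. reflexivity. }
  rewrite Hpow. unfold Rpower. unfold Rdiv. rewrite <- exp_Ropp, <- exp_plus.
  apply Rle_lt_trans with X'. { apply Rmax_l. }
  rewrite <- (exp_ln X') by exact HX'.
  apply exp_increasing.
  rewrite minus_INR by lia. rewrite mult_INR. simpl INR.
  assert (Hk : s * ln (1 + y^2) <= 2 * s * ln y + Rabs s * ln 2).
  { destruct (Rle_dec 0 s) as [H0|H0].
    - rewrite Rabs_pos_eq by lra. nra.
    - rewrite Rabs_left by lra. nra. }
  assert (HeL : e * L = ln X' + Rabs s * ln 2) by (unfold L; field; lra).
  assert (e * L < e * ln y) by (apply Rmult_lt_compat_l; lra).
  unfold e in *. nra.
Qed.

Lemma Cmod_polar A f : Cmod (A * cos f, A * sin f) = Rabs A.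
Proof.
  unfold Cmod; simpl. rewrite <- sqrt_Rsqr_abs. f_equal.
  pose proof (sin2_cos2 f) as H. unfold Rsqr in *.
  transitivity (A*A*(sin f * sin f + cos f * cos f)); [ring | rewrite H; ring].
Qed.

Lemma Cminus_polar a b f f' : Cminus (a * cos f, a * sin f) (b * cos f', b * sin f') =
  (a * cos f - b * cos f', a * sin f - b * sin f').
Proof. unfold Cminus, Cplus, Copp; simpl. f_equal; ring. Qed.

Theorem proposition6p2 (j : nat) (r : Rbar) (s : R) :
  (1 <= j)%nat -> Rbar_le (Finite 1) r -> s < INR j - / 2 ->
  forall T : R, 0 < T ->
  forall S : (Z -> C) -> R -> (Z -> C),
    is_flow_map j T S -> ~ unif_cont_on_bounded s r T S.
Proof.
  intros Hj Hr Hs T HT S HS Hu.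
  destruct (Hu 3 ltac:(lra) 1 ltac:(lra)) as [d [Hd Hu']].
  set (eta := Rmin (d/2) 1).
  assert (He0 : 0 < eta) by (unfold eta; apply Rmin_pos; lra).
  assert (Hed : eta < d) by (unfold eta; pose proof (Rmin_l (d/2) 1); lra).
  assert (He1 : eta <= 1) by (unfold eta; apply Rmin_r).
  destruct (big_N j s (PI / (T * eta)) Hj Hs) as [n [Hn HX]].
  set (N := INR n) in *.
  set (rho := jbr s (Z.of_nat n)).
  assert (Hrho : 0 < rho) by apply jbr_pos.
  assert (Hrho2 : rho * rho = Rpower (1 + N ^ 2) s).
  { unfold rho, jbr. rewrite <- Rpower_plus. rewrite <- INR_IZR_INZ. f_equal. field. }
  set (P := N ^ (2*j-1)) in *.
  set (A1 := 1 / rho). set (A2 := (1 + eta) / rho).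
  set (w1 := N ^ (2*j) + (-1)^(j+1) * A1^2 * P).
  set (w2 := N ^ (2*j) + (-1)^(j+1) * A2^2 * P).
  set (D := w2 - w1).
  assert (HD : Rabs D = (A2^2 - A1^2) * P).
  { unfold D, w1, w2. replace (N ^ (2 * j) + (-1) ^ (j + 1) * A2 ^ 2 * P -
      (N ^ (2 * j) + (-1) ^ (j + 1) * A1 ^ 2 * P)) with ((-1)^(j+1) * ((A2^2 - A1^2) * P)) by ring.
    rewrite Rabs_mult, pow_1_abs, Rabs_pos_eq. ring.
    apply Rmult_le_pos.
    - unfold A1, A2. unfold Rdiv. 
      assert (0 < /rho) by (apply Rinv_0_lt_compat; lra). nra.
    - unfold P. apply pow_le. unfold N. apply pos_INR. }
  assert (HP : 0 < P) by (unfold P, N; apply pow_lt; apply lt_0_INR; lia).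
  assert (HDbig : PI / T < Rabs D).
  { rewrite HD.
    assert (Hpow : 0 < Rpower (1 + N^2) s) by (unfold Rpower; apply exp_pos).
    assert (E : (A2^2 - A1^2) * P = ((1+eta)^2 - 1) * (P / Rpower (1 + N ^ 2) s)).
    { unfold A1, A2. rewrite <- Hrho2. field. lra. }
    rewrite E.
    assert (E2 : PI / T = eta * (PI / (T * eta))) by (field; lra).
    rewrite E2.
    assert (0 < PI / (T * eta)) by (apply Rdiv_lt_0_compat; [apply PI_RGT_0 | nra]).
    apply Rlt_le_trans with (eta * (P / Rpower (1 + N ^ 2) s)).
    - apply Rmult_lt_compat_l; lra.
    - apply Rmult_le_compat_r. apply Rlt_le, Rdiv_lt_0_compat; lra. nra. }
  assert (HD0 : D <> 0).
  { intros E. rewrite E, Rabs_R0 in HDbig. pose proof PI_RGT_0.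
    assert (0 < PI / T) by (apply Rdiv_lt_0_compat; lra). lra. }
  set (t := PI / D).
  assert (Ht : - T < t < T).
  { assert (Rabs t < T).
    { unfold t. unfold Rdiv. rewrite Rabs_mult, Rabs_inv, Rabs_pos_eq by (apply Rlt_le, PI_RGT_0).
      pose proof PI_RGT_0.
      assert (0 < Rabs D) by (apply Rabs_pos_lt; exact HD0).
      apply (Rmult_lt_reg_r (Rabs D)); [lra|].
      rewrite Rmult_assoc, Rinv_l by lra.
      unfold Rdiv in HDbig. apply (Rmult_lt_compat_l T) in HDbig; [|lra].
      rewrite <- Rmult_assoc, (Rmult_comm T PI), Rmult_assoc, Rinv_r, Rmult_1_r in HDbig by lra.
      lra. }
    apply Rabs_def2 in H. lra. }
  set (u1 := pw A1 N w1). set (u2 := pw A2 N w2).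
  assert (Hsol1 : classical_solution j T u1) by (apply pw_sol; exact Hj).
  assert (Hsol2 : classical_solution j T u2) by (apply pw_sol; exact Hj).
  assert (Ht0 : - T < 0 < T) by lra.
  specialize (Hu' (fourier (u1 0)) (fourier (u2 0)) t t).
  rewrite (HS u1 Hsol1 t Ht), (HS u2 Hsol2 t Ht) in Hu'.
  unfold u1, u2, N in Hu'. rewrite !fourier_pw, !sub_single, !hatH_single in Hu' by exact Hr.
  rewrite !Cminus_polar in Hu'.
  replace (- (w1 * t)) with (- (w2 * t) + PI) in Hu'
    by (unfold t, D in *; field; exact HD0).
  rewrite neg_cos, neg_sin in Hu'.
  fold rho in Hu'.
  replace (A1 * - cos (- (w2 * t)) - A2 * cos (- (w2 * t))) with (- (A1 + A2) * cos (- (w2 * t))) in Hu' by ring.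
  replace (A1 * - sin (- (w2 * t)) - A2 * sin (- (w2 * t))) with (- (A1 + A2) * sin (- (w2 * t))) in Hu' by ring.
  replace (A1 * cos (- (w1 * 0)) - A2 * cos (- (w2 * 0))) with ((A1 - A2) * cos 0) in Hu'
    by (rewrite !Rmult_0_r, Ropp_0; ring).
  replace (A1 * sin (- (w1 * 0)) - A2 * sin (- (w2 * 0))) with ((A1 - A2) * sin 0) in Hu'
    by (rewrite !Rmult_0_r, Ropp_0; ring).
  rewrite !Cmod_polar in Hu'.
  assert (HA1 : rho * Rabs A1 = 1).
  { unfold A1. rewrite Rabs_pos_eq. field. lra. apply Rlt_le, Rdiv_lt_0_compat; lra. }
  assert (HA2 : rho * Rabs A2 = 1 + eta).
  { unfold A2. rewrite Rabs_pos_eq. field. lra. apply Rlt_le, Rdiv_lt_0_compat; lra. }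
  assert (HA12 : rho * Rabs (A1 - A2) = eta).
  { unfold A1, A2. rewrite Rabs_left1. field. lra.
    unfold Rdiv. assert (0 < / rho) by (apply Rinv_0_lt_compat; lra). nra. }
  assert (HA3 : rho * Rabs (- (A1 + A2)) = 2 + eta).
  { unfold A1, A2. rewrite Rabs_left1. field. lra.
    unfold Rdiv. assert (0 < / rho) by (apply Rinv_0_lt_compat; lra). nra. }
  rewrite HA1, HA2, HA12, HA3 in Hu'. simpl in Hu'.
  assert (H : 2 + eta < 1).
  { apply Hu'; try lra. rewrite Rminus_diag, Rabs_R0. exact Hd. }
  lra.
Qed.
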